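(* (Liveness of YAC.) Consider a network of $n = 3f+1$ validating peers running the YAC consensus protocol, of which at most $f$ are faulty (Byzantine), under the standing assumptions listed in the context. Then every correct (valid) client transaction is eventually committed by the honest peers.
   Context: YAC protocol. There are $n=3f+1$ validating peers with a fixed initial ordered list. Rounds $r=1,2,\dots$: in round $r$ the peer processes the $r$-th proposal. The round starts when the peer begins processing the proposal and ends when it commits a block. An Ordering Service (OS) collects client transactions and broadcasts a proposal, an ordered list of transactions, to all peers. Each peer validates the proposal against its local state and discards invalid transactions. From the remaining transactions, the proposal hash and metadata, it forms a block and computes the block hash. A vote is a message containing the pair (proposal hash, block hash) and the peer's signature. Each peer computes a permutation of the peers using a pure function of the block hash and the initial peer list whose output lists are uniformly distributed. It sends its vote to the peers in that order, waiting a fixed delay between sends and cycling through the order repeatedly (vote steps), until it receives a valid commit or reject message. A supermajority is any number greater than two thirds of all peers. A commit message is a set of votes for one block hash signed by a supermajority of peers. A peer that collects a supermajority of votes for one hash broadcasts the commit message and commits the block. A reject message is a set of votes proving that no block hash can reach a supermajority. Commit forwarding: if a peer that has already committed receives a vote for that round, it sends the commit message directly to the voter. An honest peer is one that tries to synchronize with the network, creates valid votes and commits, and never creates forks. Standing assumptions: (i) The OS is itself Byzantine fault tolerant and orders transactions honestly. Every valid client transaction eventually appears in some proposal, and every proposal is delivered to all peers. (ii) Asynchronous environment: every message successfully sent is eventually received. (iii) Hashes and digital signatures are cryptographically secure, and messages cannot be altered or forged by adversaries. (iv) The reject case does not occur; its occurrence is regarded as a violation of the BFT assumption. *)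

(* Defs.v *)
From mathcomp Require Import all_boot.
From mathcomp Require Import perm.
From Stdlib Require List.

Set Implicit Arguments.
Unset Strict Implicit.
Unset Printing Implicit Defensive.

Section YAC.

(* n = 3f+1 validating peers, identified with 'I_n (the fixed initial list
   is the enumeration 0,1,...,n-1 of 'I_n). *)
Variable f : nat.
Definition npeers := (3 * f).+1.
Definition peer := 'I_npeers.

Variables (Tx Hash : eqType).

(* A block: proposal hash, metadata (round number and the local ledger, i.e.
   the hashes of the previously committed blocks), and the transactions kept
   after validation. *)
Record block := Block {
  b_ph    : Hash;
  b_round : nat;
  b_prev  : seq Hash;
  b_txs   : seq Tx }.

Record vote := Vote {
  v_round  : nat;
  v_ph     : Hash;
  v_bh     : Hash;
  v_signer : peer }.

Inductive msg :=
  | MVote   of vote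
  | MCommit of seq vote
  | MReject of seq vote.

Definition votes_of (m : msg) : seq vote :=
  match m with MVote v => [:: v] | MCommit vs => vs | MReject vs => vs end.

Definition supermajority (k : nat) : bool := 2 * npeers < 3 * k.

Definition signers (vs : seq vote) : seq peer := undup (map v_signer vs).
Definition signers_for (h : Hash) (vs : seq vote) : seq peer :=
  undup [seq v_signer v | v <- vs & v_bh v == h].

Definition valid_commit (r : nat) (h : Hash) (vs : seq vote) : bool :=
  all (fun v => (v_round v == r) && (v_bh v == h)) vs
  && supermajority (size (signers vs)).

(* reject message for round r: votes proving that no block hash can reach a
   supermajority even if all peers not yet heard from voted for it *)
Definition valid_reject (r : nat) (vs : seq vote) : Prop :=
  all (fun v => v_round v == r) vs /\
  forall h : Hash,
    ~~ supermajority (size (signers_for h vs) + (npeers - size (signers vs))).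

Record yac_system := YACSystem {
  hashP    : seq Tx -> Hash;
  hashB    : block -> Hash;
  validate : seq Hash -> seq Tx -> seq Tx;
      (* validation of a proposal against the local state (ledger) *)
  perm_of  : Hash -> {perm peer};
      (* pure function of the block hash (and the fixed initial list) *)
  delay    : nat;                        (* fixed delay between vote sends *)
  proposal : nat -> seq Tx               (* r-th proposal of the OS *)
}.

(* An execution (global discrete time nat; nothing is assumed about message
   delays except eventual delivery). *)
Record execution := Execution {
  sent      : nat -> peer -> peer -> msg -> Prop; (* time, sender, receiver *)
  recv      : nat -> peer -> msg -> Prop;          (* time, receiver *)
  prop_recv : peer -> nat -> nat;  (* time at which peer gets proposal r *)
  start     : peer -> nat -> option nat;
      (* time at which peer starts round r (begins processing proposal r) *)
  cmt       : peer -> nat -> option (nat * Hash)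
      (* time and block hash of the commit of round r by the peer *)
}.

Variables (S : yac_system) (E : execution).

Definition ledger (p : peer) (r : nat) : seq Hash :=
  pmap (fun k => omap snd (cmt E p k)) (iota 0 r).

Definition formed_block (p : peer) (r : nat) : block :=
  let L := ledger p r in
  Block (hashP S (proposal S r)) r L (validate S L (proposal S r)).

Definition my_vote (p : peer) (r : nat) : vote :=
  Vote r (hashP S (proposal S r)) (hashB S (formed_block p r)) p.

Definition received_commit_before (p : peer) (r : nat) (t : nat) : Prop :=
  exists t' vs h, t' < t /\ recv E t' p (MCommit vs) /\ valid_commit r h vs.
Definition received_reject_before (p : peer) (r : nat) (t : nat) : Prop :=
  exists t' vs, t' < t /\ recv E t' p (MReject vs) /\ valid_reject r vs.
Definition committed_before (p : peer) (r : nat) (t : nat) : Prop :=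
  exists t' h, t' < t /\ cmt E p r = Some (t', h).

Definition hashes_secure : Prop :=
  injective (hashP S) /\ injective (hashB S).

Definition validation_sound (valid : pred Tx) : Prop :=
  forall L P tx, (tx \in validate S L P -> tx \in P) /\
                 (valid tx -> tx \in P -> tx \in validate S L P).

(* (i) the OS: every valid client transaction appears in some proposal
   (delivery of every proposal to every peer is built into prop_recv) *)
Definition os_assumption (valid : pred Tx) (client_tx : Tx -> Prop) : Prop :=
  forall tx, client_tx tx -> valid tx -> exists r, tx \in proposal S r.

Definition async_delivery : Prop :=
  (forall t p q m, sent E t p q m -> exists t', t <= t' /\ recv E t' q m) /\
  (forall t q m, recv E t q m -> exists t' p, t' <= t /\ sent E t' p q m).

(* (iii) signatures cannot be forged: any vote signed by an honest peer that
   occurs in any message is that peer's actual vote of that round *)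
Definition unforgeable (honest : {set peer}) : Prop :=
  forall t p q m v, sent E t p q m -> List.In v (votes_of m) ->
    v_signer v \in honest ->
    v = my_vote (v_signer v) (v_round v) /\
    start E (v_signer v) (v_round v) <> None.

Definition no_reject : Prop :=
  forall t p q vs r, sent E t p q (MReject vs) -> ~ valid_reject r vs.

Definition honest_peer (p : peer) : Prop :=
  (forall r t0, start E p r = Some t0 ->
     prop_recv E p r <= t0 /\
     (r = 0 \/ exists t' h, cmt E p r.-1 = Some (t', h) /\ t' <= t0)) /\
  (forall r, (r = 0 \/ cmt E p r.-1 <> None) -> start E p r <> None) /\
  (forall r t h, cmt E p r = Some (t, h) ->
     exists t0, start E p r = Some t0 /\ t0 <= t) /\
  (forall r t0 k, start E p r = Some t0 ->
     let t := t0 + k * delay S in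
     ~ received_commit_before p r t -> ~ received_reject_before p r t ->
     ~ committed_before p r t ->
     sent E t p (perm_of S (hashB S (formed_block p r)) (inord (k %% npeers)))
          (MVote (my_vote p r))) /\
  (forall r h (sg : seq peer),
     uniq sg -> supermajority (size sg) ->
     (forall s, s \in sg -> exists t v, recv E t p (MVote v) /\
        v_round v = r /\ v_bh v = h /\ v_signer v = s) ->
     start E p r <> None -> exists t, cmt E p r = Some (t, h)) /\
  (forall t r h vs, recv E t p (MCommit vs) -> valid_commit r h vs ->
     start E p r <> None -> exists t', cmt E p r = Some (t', h)) /\
  (forall r t h, cmt E p r = Some (t, h) ->
     exists vs, valid_commit r h vs /\
       ((exists t1, t1 <= t /\ recv E t1 p (MCommit vs)) \/
        ((forall v, List.In v vs ->
            exists t1, t1 <= t /\ recv E t1 p (MVote v)) /\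
         forall q, exists t2, t <= t2 /\ sent E t2 p q (MCommit vs)))) /\
  (forall r t1 h t2 v, cmt E p r = Some (t1, h) -> t1 <= t2 ->
     recv E t2 p (MVote v) -> v_round v = r ->
     exists t3 vs, t2 <= t3 /\ valid_commit r h vs /\
       sent E t3 p (v_signer v) (MCommit vs)).

End YAC.

(* Main.v *)
Require Import Defs.
From mathcomp Require Import all_boot.
From mathcomp Require Import perm.
From mathcomp Require Import zify.
From Stdlib Require List.

Lemma allIn {T : Type} (P : pred T) (s : seq T) v :
  all P s -> List.In v s -> P v.
Proof.
elim: s => [|x s IH] //= /andP [Px Ps] [<-|H]; [exact: Px| exact: IH].
Qed.

Arguments allIn {T P s v}.

Lemma mapIn {T : Type} {U : eqType} (g : T -> U) (s : seq T) x :
  x \in map g s -> exists v, List.In v s /\ g v = x.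
Proof.
elim: s => [|y s IH] //=; rewrite in_cons => /orP [/eqP ->|H].
  by exists y; split; [left|].
by have [v [Hv <-]] := IH H; exists v; split; [right|].
Qed.

Arguments mapIn {T U g s x}.

Lemma supermaj_ge (f k : nat) : supermajority f k -> 2 * f + 1 <= k.
Proof. rewrite /supermajority /npeers; lia. Qed.

Lemma card_signers (f : nat) (Hash : eqType) (vs : seq (vote f Hash)) :
  #|[set x in signers vs]| = size (signers vs).
Proof.
rewrite cardsE; apply/card_uniqP; exact: undup_uniq.
Qed.

(* Two sets of size >= 2f+1 intersect in a set of size > f. *)
Lemma quorum_inter (f : nat) (A B H : {set peer f}) :
  2 * f + 1 <= #|A| -> 2 * f + 1 <= #|B| -> #|~: H| <= f ->
  exists q, q \in A :&: B :&: H.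
Proof.
move=> hA hB hH.
have hU := cardsUI A B.
have hT : #|A :|: B| <= npeers f by have := max_card (A :|: B); rewrite card_ord.
have hD := cardsID H (A :&: B).
have hS : #|A :&: B :\: H| <= #|~: H|.
  by apply: subset_leq_card; rewrite setDE subsetIr.
have : 0 < #|A :&: B :&: H|.
  move: hA hB hH hU hD hS hT.
  move: #|A| #|B| #|~: H| #|A :|: B| #|A :&: B| #|A :&: B :&: H| #|A :&: B :\: H|.
  rewrite /npeers; lia.
by rewrite card_gt0 => /set0Pn.
Qed.

Lemma quorum_one (f : nat) (A H : {set peer f}) :
  2 * f + 1 <= #|A| -> #|~: H| <= f -> exists q, q \in A :&: H.
Proof.
move=> hA hH.
have [q Hq] := @quorum_inter f A A H hA hA hH.
by exists q; move: Hq; rewrite setIid.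
Qed.

From Stdlib Require Import Classical.

Theorem lemma2 (f : nat) (Tx Hash : eqType) (S : yac_system f Tx Hash)
    (E : execution f Hash) (honest : {set peer f})
    (valid : pred Tx) (client_tx : Tx -> Prop) :
  #|~: honest| <= f ->
  (forall p, p \in honest -> honest_peer S E p) ->
  0 < delay S ->
  hashes_secure S ->
  validation_sound S valid ->
  os_assumption S valid client_tx ->
  async_delivery E ->
  unforgeable S E honest ->
  no_reject E ->
  forall tx, client_tx tx -> valid tx ->
    exists r h,
      (forall p, p \in honest -> exists t, cmt E p r = Some (t, h)) /\
      (exists b, hashB S b = h /\ tx \in b_txs b).
Proof.
move=> hF hHon hdel hsec hval hos [asy1 asy2] hunf hnorej tx hcl hvtx.
have [r0 Hr0] := hos tx hcl hvtx.
have cert : forall p r t h, p \in honest -> cmt E p r = Some (t, h) ->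
   exists vs, valid_commit r h vs /\ forall v, List.In v vs ->
     v_signer v \in honest -> v = my_vote S E (v_signer v) r.
  move=> p r t h hp Hc.
  have [c1 [c2 [c3 [c4 [c5 [c6 [c7 c8]]]]]]] := hHon p hp.
  have [vs [Hv Hor]] := c7 r t h Hc.
  exists vs; split => // v Hin Hs.
  have Hr : v_round v = r.
    by move: Hv => /andP [Hall _]; move: (allIn Hall Hin) => /andP [/eqP ? _].
  have [t' [p' [q' [m [Hsent Hm]]]]] : exists t' p' q' m,
      sent E t' p' q' m /\ List.In v (votes_of m).
    case: Hor => [[t1 [_ Hrc]]|[Hall _]].
      have [t' [p' [_ Hs']]] := asy2 _ _ _ Hrc.
      by exists t', p', p, (MCommit vs).
    have [t1 [_ Hrc]] := Hall v Hin.
    have [t' [p' [_ Hs']]] := asy2 _ _ _ Hrc.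
    by exists t', p', p, (MVote v); split => //=; left.
  have [-> _] := hunf _ _ _ _ _ Hsent Hm Hs.
  by rewrite Hr.
have memsig : forall r h (vs : seq (vote f Hash)) (q : peer f), valid_commit r h vs ->
    q \in [set x in signers vs] ->
    exists v, List.In v vs /\ v_signer v = q /\ v_bh v = h.
  move=> r h vs q /andP [Hall _]; rewrite inE mem_undup => /mapIn [v [Hin Hq]].
  exists v; split => //; split => //.
  by move: (allIn Hall Hin) => /andP [_ /eqP].
have cardsig : forall r h (vs : seq (vote f Hash)), valid_commit r h vs ->
    2 * f + 1 <= #|[set x in signers vs]|.
  by move=> r h vs /andP [_ Hs]; rewrite card_signers; exact: supermaj_ge.
have agree : forall p q r t1 t2 h1 h2, p \in honest -> q \in honest ->
    cmt E p r = Some (t1, h1) -> cmt E q r = Some (t2, h2) -> h1 = h2.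
  move=> p q r t1 t2 h1 h2 hp hq H1 H2.
  have [vs1 [Hv1 Hu1]] := cert _ _ _ _ hp H1.
  have [vs2 [Hv2 Hu2]] := cert _ _ _ _ hq H2.
  have [q' Hq'] := @quorum_inter f _ _ honest (cardsig _ _ _ Hv1)
                     (cardsig _ _ _ Hv2) hF.
  move: Hq'; rewrite !inE -!andbA => /and3P [Hq1 Hq2 Hqh].
  have [v1 [Hin1 [Hs1 Hb1]]] := memsig r h1 vs1 q' Hv1 ltac:(by rewrite inE).
  have [v2 [Hin2 [Hs2 Hb2]]] := memsig r h2 vs2 q' Hv2 ltac:(by rewrite inE).
  rewrite -Hb1 -Hb2 (Hu1 v1 Hin1) ?Hs1 // (Hu2 v2 Hin2) ?Hs2 //.
have [q0 Hq0] : exists q0, q0 \in honest.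
  have [q Hq] := @quorum_one f setT honest ltac:(rewrite cardsT card_ord /npeers; lia) hF.
  by exists q; move: Hq; rewrite setTI.

have main : forall r, exists h, forall p, p \in honest ->
    exists t, cmt E p r = Some (t, h).
  elim/ltn_ind => r IH.
  have Hled : forall p q, p \in honest -> q \in honest ->
      ledger E p r = ledger E q r.
    move=> p q hp hq; rewrite /ledger; apply: eq_in_pmap => k.
    rewrite mem_iota add0n => /andP [_ hk].
    have [h Hh] := IH k hk.
    by have [t1 ->] := Hh p hp; have [t2 ->] := Hh q hq.
  have Hstart : forall p, p \in honest -> exists t0, start E p r = Some t0.
    move=> p hp.
    have [c1 [c2 _]] := hHon p hp.
    have : start E p r <> None.
      apply: c2; case: r IH {Hled} => [|r] IH; first by left.
      right; have [h Hh] := IH r (ltnSn r).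
      by have [t ->] := Hh p hp.
    by case: (start E p r) => [t0|] // _; exists t0.
  have Hsend : forall p, p \in honest -> cmt E p r = None -> forall q T,
      exists t, T <= t /\ sent E t p q (MVote (my_vote S E p r)).
    move=> p hp Hc q T.
    have [c1 [c2 [c3 [c4 [c5 [c6 [c7 c8]]]]]]] := hHon p hp.
    have [t0 Ht0] := Hstart p hp.
    set sig := Defs.perm_of S (hashB S (formed_block S E p r)).
    pose i := (perm_inv sig) q.
    pose k := i + T * npeers f.
    have Hs := c4 r t0 k Ht0.
    have Hk : k %% npeers f = i.
      by rewrite /k addnC modnMDl modn_small.
    rewrite /= Hk inord_val permKV in Hs.
    exists (t0 + k * delay S); split.
      have : T <= k by rewrite /k /npeers; nia.
      have := leq_pmulr k hdel; lia.
    apply: Hs.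
    - move=> [t' [vs [h [_ [Hr Hv]]]]].
      have [t'' Hc'] := c6 _ _ _ _ Hr Hv ltac:(by rewrite Ht0).
      by rewrite Hc in Hc'.
    - move=> [t' [vs [_ [Hr Hv]]]].
      have [t'' [p' [_ Hs']]] := asy2 _ _ _ Hr.
      exact: (hnorej _ _ _ _ r Hs' Hv).
    - by move=> [t' [h [_ Hc']]]; rewrite Hc in Hc'.
  have Hsome : exists p t h, p \in honest /\ cmt E p r = Some (t, h).
    apply: NNPP => Hno.
    have Hnone : forall p, p \in honest -> cmt E p r = None.
      move=> p hp; case Hc: (cmt E p r) => [[t h]|] //.
      by exfalso; apply: Hno; exists p, t, h.
    have [c1 [c2 [c3 [c4 [c5 [c6 [c7 c8]]]]]]] := hHon q0 Hq0.
    have [t0 Ht0] := Hstart q0 Hq0.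
    have Hsm : supermajority f (size (enum honest)).
      rewrite /supermajority -cardE.
      move: hF (cardsC honest); rewrite card_ord /npeers. move: #|honest| #|~: honest|; lia.
    have Hall : forall s, s \in enum honest -> exists t v,
        recv E t q0 (MVote v) /\ v_round v = r /\
        v_bh v = hashB S (formed_block S E q0 r) /\ v_signer v = s.
      move=> s; rewrite mem_enum => hs.
      have [t1 [_ Hsent]] := Hsend s hs (Hnone s hs) q0 0.
      have [t2 [_ Hrc]] := asy1 _ _ _ _ Hsent.
      exists t2, (my_vote S E s r); split => //; split => //; split => //.
      by rewrite /my_vote /= /formed_block (Hled s q0 hs Hq0).
    have [t Ht] := c5 r _ (enum honest) (enum_uniq _) Hsm Hall
      ltac:(by rewrite Ht0).
    by rewrite Hnone in Ht.
  have [p1 [t1 [h [hp1 Hc1]]]] := Hsome.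
  exists h => p hp.
  case Hc: (cmt E p r) => [[t h']|].
    by exists t; rewrite (agree p p1 r t t1 h' h hp hp1 Hc Hc1).
  exfalso.
  have [c1 [c2 [c3 [c4 [c5 [c6 [c7 c8]]]]]]] := hHon p hp.
  have [d1 [d2 [d3 [d4 [d5 [d6 [d7 d8]]]]]]] := hHon p1 hp1.
  have [t2 [Ht2 Hsent]] := Hsend p hp Hc p1 t1.
  have [t3 [Ht3 Hrc]] := asy1 _ _ _ _ Hsent.
  have [t4 [vs [_ [Hv Hs4]]]] := d8 r t1 h t3 _ Hc1 ltac:(lia) Hrc erefl.
  have [t5 [_ Hrc5]] := asy1 _ _ _ _ Hs4.
  have [t0 Ht0] := Hstart p hp.
  have [t6 Hc6] := c6 _ _ _ _ Hrc5 Hv ltac:(by rewrite Ht0).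
  by rewrite Hc in Hc6.
have [h Hh] := main r0.
exists r0, h; split => //.
have [t Ht] := Hh q0 Hq0.
have [vs [Hv Hu]] := cert _ _ _ _ Hq0 Ht.
have [q Hq] := @quorum_one f _ honest (cardsig _ _ _ Hv) hF.
move: Hq; rewrite inE => /andP [Hq1 Hqh].
have [v [Hin [Hs Hb]]] := memsig r0 h vs q Hv Hq1.
exists (formed_block S E q r0); split.
  by rewrite -Hb (Hu v Hin) ?Hs.
by rewrite /=; apply: (proj2 (hval _ _ _)).
Qed.
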